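(* Let $h>0$, $\mathbb{T}:=\{0,h,2h,\ldots\}$, $n\in\mathbb{N}$, and $p_0,\ldots,p_{n-1}\in\mathbb{C}\setminus\{-\tfrac1h\}$; define $p:\mathbb{T}\to\mathbb{C}$ by $p(t)=p_k$ if $\tfrac th\equiv k\pmod n$, where $p$ is periodic with period $n$ and not periodic with any smaller period. Let $E:=\prod_{i=0}^{n-1}|1+hp_i|$ and assume $0<E\ne1$. For $k\in\{0,\ldots,n-1\}$ let $S_k:=\sum_{j=1}^{n}\left(\prod_{i=0}^{j-1}|1+hp_{(k+i)\bmod n}|\right)^{-1}$. Then the equation $\Delta_hx(t)-p(t)x(t)=0$, $t\in\mathbb{T}$, with $\Delta_hx(t):=\frac{x(t+h)-x(t)}{h}$, has Ulam stability on $\mathbb{T}$ with Ulam stability constant $$K_0:=\frac{hE}{|1-E|}\max\{S_0,S_1,\ldots,S_{n-1}\}.$$ Moreover, if $E>1$, then $K_0$ is the minimum Ulam stability constant for this equation.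
   Context: A constant $K>0$ is an Ulam stability constant for the equation on $\mathbb{T}$ if for every $\varepsilon>0$ and every $\phi:\mathbb{T}\to\mathbb{C}$ with $|\Delta_h\phi(t)-p(t)\phi(t)|\le\varepsilon$ for all $t\in\mathbb{T}$, there is a solution $x$ with $|\phi(t)-x(t)|\le K\varepsilon$ for all $t\in\mathbb{T}$; the equation has Ulam stability if such $K$ exists. ''Minimum'' means no positive number smaller than $K_0$ is an Ulam stability constant. Note $E=|e_p(nh)|$ where $e_p(t)=\prod_{j=0}^{t/h-1}(1+hp(jh))$. *)

(* Defs.v *)
From Stdlib Require Import Reals Lra.
From Coquelicot Require Import Coquelicot.
Open Scope R_scope.

(* The time scale T = {0, h, 2h, ...} is parametrised by nat: the point t = m*h
   corresponds to m.  A function x : T -> C is thus a function nat -> C,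
   with x m standing for x(m h). *)

Fixpoint prodR (f : nat -> R) (m : nat) : R :=
  match m with O => 1 | S k => prodR f k * f k end.
Fixpoint sumR (f : nat -> R) (m : nat) : R :=
  match m with O => 0 | S k => sumR f k + f k end.
Fixpoint maxR (f : nat -> R) (m : nat) : R :=
  match m with O => f O | S k => Rmax (maxR f k) (f (S k)) end.

Definition delta_h (h : R) (x : nat -> C) (m : nat) : C :=
  Cdiv (Cminus (x (S m)) (x m)) (RtoC h).

Definition is_solution (h : R) (p : nat -> C) (x : nat -> C) : Prop :=
  forall m : nat, Cminus (delta_h h x m) (Cmult (p m) (x m)) = RtoC 0.

Definition ulam_constant (h : R) (p : nat -> C) (K : R) : Prop :=
  0 < K /\
  forall (eps : R), 0 < eps ->
  forall phi : nat -> C,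
    (forall m : nat, Cmod (Cminus (delta_h h phi m) (Cmult (p m) (phi m))) <= eps) ->
    exists x : nat -> C, is_solution h p x /\
      forall m : nat, Cmod (Cminus (phi m) (x m)) <= K * eps.

Definition ulam_stable (h : R) (p : nat -> C) : Prop :=
  exists K, ulam_constant h p K.

Definition min_ulam_constant (h : R) (p : nat -> C) (K0 : R) : Prop :=
  ulam_constant h p K0 /\
  forall K : R, 0 < K -> K < K0 -> ~ ulam_constant h p K.

Definition absfac (h : R) (pk : nat -> C) (i : nat) : R :=
  Cmod (Cplus (RtoC 1) (Cmult (RtoC h) (pk i))).

Definition E_const (h : R) (n : nat) (pk : nat -> C) : R :=
  prodR (absfac h pk) n.

Definition S_const (h : R) (n : nat) (pk : nat -> C) (k : nat) : R :=
  sumR (fun j => / prodR (fun i => absfac h pk ((k + i) mod n)) (S j)) n.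

Definition K0_const (h : R) (n : nat) (pk : nat -> C) : R :=
  h * E_const h n pk / Rabs (1 - E_const h n pk) * maxR (S_const h n pk) (n - 1).

(* Main.v *)
Require Import Defs.
From Stdlib Require Import Reals Lra Lia.
From Coquelicot Require Import Coquelicot.
Open Scope R_scope.

Lemma prodR_ext f g m : (forall i, (i < m)%nat -> f i = g i) -> prodR f m = prodR g m.
Proof. induction m; intros H; simpl; auto. rewrite IHm by (intros; apply H; lia). rewrite H by lia. auto. Qed.
Lemma sumR_ext f g m : (forall i, (i < m)%nat -> f i = g i) -> sumR f m = sumR g m.
Proof. induction m; intros H; simpl; auto. rewrite IHm by (intros; apply H; lia). rewrite H by lia. auto. Qed.
Lemma prodR_split f a b : prodR f (a + b) = prodR f a * prodR (fun l => f (a + l)%nat) b.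
Proof. induction b; simpl. rewrite Nat.add_0_r; ring. rewrite Nat.add_succ_r; simpl. rewrite IHb; ring. Qed.
Lemma prodR_shift f m : prodR f (S m) = f O * prodR (fun i => f (S i)) m.
Proof. induction m. simpl; ring. change (prodR f (S (S m))) with (prodR f (S m) * f (S m)). rewrite IHm. simpl. ring. Qed.
Lemma sumR_shift f m : sumR f (S m) = f O + sumR (fun i => f (S i)) m.
Proof. induction m. simpl; ring. change (sumR f (S (S m))) with (sumR f (S m) + f (S m)). rewrite IHm. simpl. ring. Qed.
Lemma sumR_scal c f m : sumR (fun i => c * f i) m = c * sumR f m.
Proof. induction m; simpl. ring. rewrite IHm; ring. Qed.
Lemma prodR_nz f m i : prodR f m <> 0 -> (i < m)%nat -> f i <> 0.
Proof. induction m; simpl; intros H Hi. lia. destruct (Nat.eq_dec i m). subst. intro E; apply H; rewrite E; ring.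
  apply IHm. intro E; apply H; rewrite E; ring. lia. Qed.
Lemma prodR_pos f m : (forall i, (i < m)%nat -> 0 < f i) -> 0 < prodR f m.
Proof. induction m; simpl; intros H. lra. apply Rmult_lt_0_compat. apply IHm; intros; apply H; lia. apply H; lia. Qed.
Lemma sumR_nonneg f m : (forall i, (i < m)%nat -> 0 <= f i) -> 0 <= sumR f m.
Proof. induction m; simpl; intros H. lra. assert (0 <= sumR f m) by (apply IHm; intros; apply H; lia). assert (0 <= f m) by (apply H; lia). lra. Qed.
Lemma sumR_pos f m : (0 < m)%nat -> (forall i, (i < m)%nat -> 0 < f i) -> 0 < sumR f m.
Proof. destruct m. lia. intros _ H. simpl. assert (0 <= sumR f m) by (apply sumR_nonneg; intros; left; apply H; lia). assert (0 < f m) by (apply H; lia). lra. Qed.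
Lemma maxR_ge f N k : (k <= N)%nat -> f k <= maxR f N.
Proof. induction N; intros Hk; simpl. assert (k = O) by lia; subst; lra.
  destruct (Nat.eq_dec k (S N)). subst. apply Rmax_r. eapply Rle_trans. apply IHN; lia. apply Rmax_l. Qed.
Lemma maxR_att f N : exists k, (k <= N)%nat /\ maxR f N = f k.
Proof. induction N. exists O; split; auto. destruct IHN as [k [Hk E]]. simpl. unfold Rmax. destruct (Rle_dec (maxR f N) (f (S N))).
  exists (S N); auto. exists k; split; auto. Qed.

Definition Af h n pk m := absfac h pk (m mod n).
Definition Pf h n pk m := prodR (Af h n pk) m.
Definition sig h n pk m := sumR (fun j => / Pf h n pk (m + S j)) n.

Lemma A_pos h n pk m : (0 < n)%nat -> 0 < E_const h n pk -> 0 < Af h n pk m.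
Proof. intros Hn HE. unfold Af. assert (Hi : (m mod n < n)%nat) by (apply Nat.mod_upper_bound; lia).
  assert (H := prodR_nz (absfac h pk) n _ (Rgt_not_eq _ _ HE) Hi).
  assert (0 <= absfac h pk (m mod n)) by apply Cmod_ge_0. lra. Qed.
Lemma P_pos h n pk m : (0 < n)%nat -> 0 < E_const h n pk -> 0 < Pf h n pk m.
Proof. intros. apply prodR_pos. intros; apply A_pos; auto. Qed.
Lemma A_per h n pk m : (0 < n)%nat -> Af h n pk (m + n) = Af h n pk m.
Proof. intros. unfold Af. replace (m+n)%nat with (m + 1*n)%nat by lia. rewrite Nat.Div0.mod_add. auto. Qed.
Lemma Q_E h n pk m : (0 < n)%nat -> 0 < E_const h n pk ->
  prodR (fun i => Af h n pk (m + i)) n = E_const h n pk.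
Proof. intros Hn HE. induction m.
  - unfold E_const. apply prodR_ext. intros i Hi. unfold Af. simpl. rewrite Nat.mod_small; auto.
  - rewrite <- IHm. assert (Ha := A_pos h n pk m Hn HE).
    apply (Rmult_eq_reg_l (Af h n pk m)); [| lra].
    transitivity (prodR (fun i => Af h n pk (m + i)) (S n)).
    + rewrite prodR_shift. rewrite Nat.add_0_r. f_equal. apply prodR_ext. intros; f_equal; lia.
    + simpl. rewrite A_per; auto. ring. Qed.
Lemma P_per h n pk m : (0 < n)%nat -> 0 < E_const h n pk ->
  Pf h n pk (m + n) = Pf h n pk m * E_const h n pk.
Proof. intros. unfold Pf. rewrite prodR_split. f_equal. apply Q_E; auto. Qed.
Lemma P_S h n pk m : Pf h n pk (S m) = Pf h n pk m * Af h n pk m.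
Proof. reflexivity. Qed.

Lemma S_eq h n pk m : (0 < n)%nat -> 0 < E_const h n pk ->
  S_const h n pk (m mod n) = Pf h n pk m * sig h n pk m.
Proof. intros Hn HE. unfold S_const, sig. rewrite <- sumR_scal. apply sumR_ext. intros j Hj.
  assert (Hp: Pf h n pk (m + S j) = Pf h n pk m * prodR (fun i => Af h n pk (m + i)) (S j)).
  { unfold Pf. apply prodR_split. }
  rewrite Hp. assert (0 < Pf h n pk m) by (apply P_pos; auto).
  replace (prodR (fun i : nat => absfac h pk ((m mod n + i) mod n)) (S j)) with (prodR (fun i => Af h n pk (m + i)) (S j)).
  2:{ apply prodR_ext. intros. unfold Af. rewrite Nat.Div0.add_mod_idemp_l. auto. }
  assert (0 < prodR (fun i => Af h n pk (m + i)) (S j)) by (apply prodR_pos; intros; apply A_pos; auto).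
  field. lra. Qed.

Lemma sig_step h n pk m : (0 < n)%nat -> 0 < E_const h n pk ->
  sig h n pk m = sig h n pk (S m) + / Pf h n pk (S m) - / (Pf h n pk (S m) * E_const h n pk).
Proof. intros Hn HE. unfold sig.
  assert (H1 := sumR_shift (fun j => / Pf h n pk (m + S j)) n).
  simpl in H1. rewrite Nat.add_1_r in H1.
  replace (sumR (fun i : nat => / Pf h n pk (m + S (S i))) n) with (sumR (fun j : nat => / Pf h n pk (S m + S j)) n) in H1
   by (apply sumR_ext; intros; f_equal; f_equal; lia).
  replace (m + S n)%nat with (S m + n)%nat in H1 by lia. rewrite P_per in H1 by auto. lra. Qed.

Lemma sig_pos h n pk m : (0 < n)%nat -> 0 < E_const h n pk -> 0 < sig h n pk m.
Proof. intros. apply sumR_pos; auto. intros. apply Rinv_0_lt_compat, P_pos; auto. Qed.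

Fixpoint ef (h : R) (p : nat -> C) (m : nat) : C :=
  match m with O => RtoC 1 | S k => Cmult (ef h p k) (Cplus (RtoC 1) (Cmult (RtoC h) (p k))) end.

Lemma Cmod_ef h n pk p m : (forall m, p m = pk (m mod n)) -> Cmod (ef h p m) = Pf h n pk m.
Proof. intros Hp. induction m. simpl. apply Cmod_1. simpl. rewrite Cmod_mult, IHm, Hp. reflexivity. Qed.

Lemma hC h : 0 < h -> RtoC h <> RtoC 0.
Proof. intros H E. injection E. lra. Qed.

Lemma ef_sol h p c : 0 < h -> is_solution h p (fun m => Cmult c (ef h p m)).
Proof. intros Hh m. unfold delta_h. simpl. field. apply hC; auto. Qed.

Lemma sol_form h p x : 0 < h -> is_solution h p x -> forall m, x m = Cmult (x O) (ef h p m).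
Proof. intros Hh Hs m. induction m. simpl. ring. simpl.
  specialize (Hs m). unfold delta_h in Hs.
  assert (x (S m) = Cmult (x m) (Cplus (RtoC 1) (Cmult (RtoC h) (p m)))).
  { assert (Hh' := hC h Hh).
    apply (f_equal (fun z => Cmult z (RtoC h))) in Hs.
    replace (Cmult (Cminus (Cdiv (Cminus (x (S m)) (x m)) h) (Cmult (p m) (x m))) h) with
      (Cminus (x (S m)) (Cmult (x m) (Cplus (RtoC 1) (Cmult (RtoC h) (p m))))) in Hs by (field; auto).
    replace (Cmult (RtoC 0) (RtoC h)) with (RtoC 0) in Hs by ring.
    apply (f_equal (fun z => Cplus z (Cmult (x m) (Cplus (RtoC 1) (Cmult (RtoC h) (p m)))))) in Hs.
    ring_simplify in Hs. rewrite Hs. ring. }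
  rewrite H, IHm. ring. Qed.

Lemma phi_rec h p phi m : 0 < h ->
  phi (S m) = Cplus (Cmult (Cplus (RtoC 1) (Cmult (RtoC h) (p m))) (phi m))
     (Cmult (RtoC h) (Cminus (delta_h h phi m) (Cmult (p m) (phi m)))).
Proof. intros Hh. unfold delta_h. field. apply hC; auto. Qed.

Definition Bf h n pk m := E_const h n pk * (Pf h n pk m * sig h n pk m) / Rabs (1 - E_const h n pk).

Lemma K0_bound h n pk m : 0 < h -> (0 < n)%nat -> 0 < E_const h n pk -> E_const h n pk <> 1 ->
  h * Bf h n pk m <= K0_const h n pk.
Proof. intros Hh Hn HE H1. unfold Bf, K0_const. rewrite <- S_eq by auto.
  assert (Hk : (m mod n <= n - 1)%nat) by (assert (m mod n < n)%nat by (apply Nat.mod_upper_bound; lia); lia).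
  assert (Hm := maxR_ge (S_const h n pk) _ _ Hk).
  assert (0 < Rabs (1 - E_const h n pk)) by (apply Rabs_pos_lt; lra).
  unfold Rdiv. set (a := / Rabs (1 - E_const h n pk)). assert (0 < a) by (apply Rinv_0_lt_compat; auto).
  replace (h * (E_const h n pk * S_const h n pk (m mod n) * a)) with ((h * E_const h n pk * a) * S_const h n pk (m mod n)) by ring.
  replace (h * E_const h n pk * a * maxR (S_const h n pk) (n - 1)) with ((h * E_const h n pk * a) * maxR (S_const h n pk) (n - 1)) by ring.
  apply Rmult_le_compat_l; auto. left. apply Rmult_lt_0_compat; auto. apply Rmult_lt_0_compat; auto. Qed.

Lemma K0_pos h n pk : 0 < h -> (0 < n)%nat -> 0 < E_const h n pk -> E_const h n pk <> 1 ->
  0 < K0_const h n pk.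
Proof. intros Hh Hn HE H1. unfold K0_const.
  assert (0 < Rabs (1 - E_const h n pk)) by (apply Rabs_pos_lt; lra).
  assert (0 < S_const h n pk (0 mod n)) by (rewrite S_eq by auto; apply Rmult_lt_0_compat; [apply P_pos|apply sig_pos]; auto).
  rewrite Nat.Div0.mod_0_l in H0.
  assert (S_const h n pk 0 <= maxR (S_const h n pk) (n-1)) by (apply maxR_ge; lia).
  apply Rmult_lt_0_compat; [|lra]. apply Rdiv_lt_0_compat; auto. apply Rmult_lt_0_compat; auto. Qed.

Lemma Cmod_a h n pk p m : (forall m, p m = pk (m mod n)) ->
  Cmod (Cplus (RtoC 1) (Cmult (RtoC h) (p m))) = Af h n pk m.
Proof. intros Hp. rewrite Hp. reflexivity. Qed.

Lemma case_lt1 h n pk p phi eps : 0 < h -> (0 < n)%nat -> 0 < E_const h n pk -> E_const h n pk < 1 ->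
  (forall m, p m = pk (m mod n)) ->
  (forall m : nat, Cmod (Cminus (delta_h h phi m) (Cmult (p m) (phi m))) <= eps) ->
  forall m, Cmod (Cminus (phi m) (Cmult (phi O) (ef h p m))) <= h * eps * Bf h n pk m.
Proof. intros Hh Hn HE H1 Hp Hphi m.
  assert (Hab : Rabs (1 - E_const h n pk) = 1 - E_const h n pk) by (apply Rabs_right; lra).
  induction m.
  - simpl. replace (Cminus (phi O) (Cmult (phi O) (RtoC 1))) with (RtoC 0) by ring. rewrite Cmod_0.
    unfold Bf. rewrite Hab. assert (0 < Pf h n pk 0 * sig h n pk 0) by (apply Rmult_lt_0_compat; [apply P_pos|apply sig_pos]; auto).
    assert (0 <= eps) by (eapply Rle_trans; [apply Cmod_ge_0| apply (Hphi O)]).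
    apply Rmult_le_pos. nra. apply Rdiv_le_0_compat; nra.
  - set (a := Cplus (RtoC 1) (Cmult (RtoC h) (p m))).
    set (r := Cminus (delta_h h phi m) (Cmult (p m) (phi m))).
    assert (HD : Cminus (phi (S m)) (Cmult (phi O) (ef h p (S m))) =
       Cplus (Cmult a (Cminus (phi m) (Cmult (phi O) (ef h p m)))) (Cmult (RtoC h) r)).
    { rewrite (phi_rec h p phi m Hh). simpl. fold a. fold r. ring. }
    rewrite HD. eapply Rle_trans. apply Cmod_triangle. rewrite !Cmod_mult.
    unfold a. rewrite (Cmod_a h n pk p m Hp). rewrite Cmod_R, Rabs_right by lra.
    assert (HA := A_pos h n pk m Hn HE).
    assert (Hr : Cmod r <= eps) by apply Hphi.
    assert (HB : Bf h n pk (S m) = Af h n pk m * Bf h n pk m + 1).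
    { unfold Bf. rewrite Hab. rewrite (sig_step h n pk m) by auto. rewrite P_S.
      assert (0 < Pf h n pk m) by (apply P_pos; auto). field. split; [lra|]. split; [lra|]. split; lra. }
    rewrite HB. nra. Qed.

Definition gf h n pk m := sig h n pk m * E_const h n pk / (E_const h n pk - 1).

Lemma g_step h n pk m : (0 < n)%nat -> 1 < E_const h n pk ->
  gf h n pk m = gf h n pk (S m) + / Pf h n pk (S m).
Proof. intros Hn HE. unfold gf. rewrite (sig_step h n pk m) by (auto; lra).
  assert (0 < Pf h n pk (S m)) by (apply P_pos; auto; lra). field. lra. Qed.

Lemma g_nonneg h n pk m : (0 < n)%nat -> 1 < E_const h n pk -> 0 <= gf h n pk m.
Proof. intros. unfold gf. assert (0 < sig h n pk m) by (apply sig_pos; auto; lra).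
  apply Rdiv_le_0_compat; nra. Qed.

Lemma g_mono h n pk m d : (0 < n)%nat -> 1 < E_const h n pk -> gf h n pk (m + d) <= gf h n pk m.
Proof. intros. induction d. rewrite Nat.add_0_r; lra. rewrite Nat.add_succ_r.
  rewrite (g_step h n pk (m + d)) in IHd by auto.
  assert (0 < Pf h n pk (S (m+d))) by (apply P_pos; auto; lra).
  assert (0 < / Pf h n pk (S (m+d))) by (apply Rinv_0_lt_compat; auto). lra. Qed.

Lemma sig_per h n pk m : (0 < n)%nat -> 0 < E_const h n pk ->
  sig h n pk (m + n) = sig h n pk m / E_const h n pk.
Proof. intros. unfold sig, Rdiv. rewrite Rmult_comm, <- sumR_scal. apply sumR_ext. intros.
  replace (m + n + S i)%nat with ((m + S i) + n)%nat by lia. rewrite P_per by auto.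
  assert (0 < Pf h n pk (m + S i)) by (apply P_pos; auto). field. lra. Qed.

Lemma sig_pow h n pk q : (0 < n)%nat -> 0 < E_const h n pk ->
  sig h n pk (q * n) = sig h n pk 0 * (/ E_const h n pk) ^ q.
Proof. intros. induction q. simpl. ring. replace (S q * n)%nat with (q * n + n)%nat by lia.
  rewrite sig_per by auto. rewrite IHq. simpl. field. lra. Qed.

Lemma g_pow h n pk q : (0 < n)%nat -> 1 < E_const h n pk ->
  gf h n pk (q * n) = gf h n pk 0 * (/ E_const h n pk) ^ q.
Proof. intros. unfold gf. rewrite sig_pow by (auto; lra). field. lra. Qed.

Lemma g_lim h n pk d : (0 < n)%nat -> 1 < E_const h n pk -> 0 < d ->
  exists M, forall m, (M <= m)%nat -> gf h n pk m < d.
Proof. intros Hn HE Hd.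
  assert (Hg0 : 0 < gf h n pk 0) by (unfold gf; assert (0 < sig h n pk 0) by (apply sig_pos; auto; lra); apply Rdiv_lt_0_compat; nra).
  assert (Hx : Rabs (/ E_const h n pk) < 1).
  { rewrite Rabs_right. apply (Rmult_lt_reg_l (E_const h n pk)); [lra|]. rewrite Rinv_r by lra. lra.
    left; apply Rinv_0_lt_compat; lra. }
  destruct (pow_lt_1_zero _ Hx (d / gf h n pk 0)) as [N HN]. apply Rdiv_lt_0_compat; auto.
  exists (N * n)%nat. intros m Hm. replace m with (N * n + (m - N * n))%nat by lia.
  eapply Rle_lt_trans. apply g_mono; auto. rewrite g_pow by auto.
  specialize (HN N (le_n _)). rewrite Rabs_right in HN.
  apply (Rmult_lt_compat_l (gf h n pk 0)) in HN; auto. replace (gf h n pk 0 * (d / gf h n pk 0)) with d in HN by (field; lra). auto.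
  left; apply pow_lt. apply Rinv_0_lt_compat; lra. Qed.

Lemma ef_nz h n pk p m : (0 < n)%nat -> 0 < E_const h n pk -> (forall m, p m = pk (m mod n)) ->
  ef h p m <> RtoC 0.
Proof. intros. apply Cmod_gt_0. rewrite (Cmod_ef h n pk p m) by auto. apply P_pos; auto. Qed.

Lemma Cmod_fst z : Rabs (fst z) <= Cmod z.
Proof. eapply Rle_trans; [apply Rmax_l| apply Rmax_Cmod]. Qed.
Lemma Cmod_snd z : Rabs (snd z) <= Cmod z.
Proof. eapply Rle_trans; [apply Rmax_r| apply Rmax_Cmod]. Qed.
Lemma Cmod_le_sum z : Cmod z <= Rabs (fst z) + Rabs (snd z).
Proof. destruct z as [x y]. unfold Cmod. simpl.
  rewrite <- (sqrt_Rsqr (Rabs x + Rabs y)) by (pose proof (Rabs_pos x); pose proof (Rabs_pos y); lra).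
  apply sqrt_le_1_alt. unfold Rsqr. pose proof (Rabs_pos x); pose proof (Rabs_pos y).
  assert (x*x = Rabs x * Rabs x) by (rewrite <- Rabs_mult; rewrite Rabs_right; nra).
  assert (y*y = Rabs y * Rabs y) by (rewrite <- Rabs_mult; rewrite Rabs_right; nra). nra. Qed.


Lemma case_gt1 h n pk p phi eps : 0 < h -> (0 < n)%nat -> 1 < E_const h n pk ->
  (forall m, p m = pk (m mod n)) ->
  (forall m : nat, Cmod (Cminus (delta_h h phi m) (Cmult (p m) (phi m))) <= eps) ->
  exists c, forall m, Cmod (Cminus (phi m) (Cmult c (ef h p m))) <= h * eps * Bf h n pk m.
Proof. intros Hh Hn HE Hp Hphi.
  assert (HE0 : 0 < E_const h n pk) by lra.
  set (w := fun m => Cdiv (phi m) (ef h p m)).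
  assert (Hstep : forall m, Cmod (Cminus (w (S m)) (w m)) <= h * eps * (gf h n pk m - gf h n pk (S m))).
  { intro m. rewrite (g_step h n pk m) by auto.
    replace (gf h n pk (S m) + / Pf h n pk (S m) - gf h n pk (S m)) with (/ Pf h n pk (S m)) by ring.
    unfold w. assert (H1 := ef_nz h n pk p m Hn HE0 Hp). assert (H2 := ef_nz h n pk p (S m) Hn HE0 Hp).
    assert (Ha : Cplus (RtoC 1) (Cmult (RtoC h) (p m)) <> RtoC 0).
    { intro E0. simpl in H2. apply H2. rewrite E0. ring. }
    replace (Cminus (Cdiv (phi (S m)) (ef h p (S m))) (Cdiv (phi m) (ef h p m))) with
      (Cdiv (Cmult (RtoC h) (Cminus (delta_h h phi m) (Cmult (p m) (phi m)))) (ef h p (S m))).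
    2:{ rewrite (phi_rec h p phi m Hh). simpl. field. auto. }
    rewrite Cmod_div by auto. rewrite Cmod_mult, Cmod_R, Rabs_right by lra.
    rewrite (Cmod_ef h n pk p (S m)) by auto. unfold Rdiv. 
    assert (0 < / Pf h n pk (S m)) by (apply Rinv_0_lt_compat, P_pos; auto).
    specialize (Hphi m). apply Rmult_le_compat_r; [lra|]. apply Rmult_le_compat_l; lra. }
  assert (Hcd : forall m d, Cmod (Cminus (w m) (w (m + d)%nat)) <= h * eps * (gf h n pk m - gf h n pk (m + d))).
  { intros m d. induction d. rewrite Nat.add_0_r. replace (Cminus (w m) (w m)) with (RtoC 0) by ring. rewrite Cmod_0. lra.
    rewrite Nat.add_succ_r. replace (Cminus (w m) (w (S (m + d)))) with (Cplus (Cminus (w m) (w (m + d)%nat)) (Cminus (w (m+d)%nat) (w (S (m + d))))) by ring.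
    eapply Rle_trans. apply Cmod_triangle. 
    assert (Cmod (Cminus (w (m + d)%nat) (w (S (m + d)))) = Cmod (Cminus (w (S (m + d))) (w (m + d)%nat))).
    { replace (Cminus (w (m + d)%nat) (w (S (m + d)))) with (Cmult (RtoC (-1)) (Cminus (w (S (m + d))) (w (m + d)%nat))) by (apply injective_projections; simpl; ring).
      rewrite Cmod_mult, Cmod_R. replace (Rabs (-1)) with 1 by (symmetry; rewrite Rabs_left; lra). ring. }
    rewrite H. specialize (Hstep (m + d)%nat). lra. }
  assert (Heps : 0 <= eps) by (eapply Rle_trans; [apply Cmod_ge_0| apply (Hphi O)]).
  assert (HC : forall d, 0 < d -> exists M, forall n1 n2, (M <= n1)%nat -> (n1 <= n2)%nat -> Cmod (Cminus (w n1) (w n2)) < d).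
  { intros d Hd. destruct (g_lim h n pk (d / (h * (eps + 1))) Hn HE) as [M HM].
    apply Rdiv_lt_0_compat; auto. apply Rmult_lt_0_compat; lra.
    exists M. intros n1 n2 H1 H2. replace n2 with (n1 + (n2 - n1))%nat by lia.
    eapply Rle_lt_trans. apply Hcd. specialize (HM n1 H1).
    assert (0 <= gf h n pk (n1 + (n2 - n1))) by (apply g_nonneg; auto).
    assert (h * (eps + 1) * gf h n pk n1 < d).
    { apply (Rmult_lt_compat_l (h * (eps + 1))) in HM. replace (h * (eps + 1) * (d / (h * (eps + 1)))) with d in HM by (field; lra). auto.
      apply Rmult_lt_0_compat; lra. }
    assert (0 <= gf h n pk n1) by (apply g_nonneg; auto).
    assert (0 <= h * eps * gf h n pk (n1 + (n2 - n1))) by (apply Rmult_le_pos; nra).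
    assert (0 <= h * gf h n pk n1) by nra. nra. }
  assert (Hcc : forall (f : C -> R), (forall z, Rabs (f z) <= Cmod z) -> (forall z1 z2, f (Cminus z1 z2) = f z1 - f z2) ->
     Cauchy_crit (fun m => f (w m))).
  { intros f Hf Hf2 d Hd. destruct (HC d Hd) as [M HM]. exists M. intros n1 n2 H1 H2. unfold Rdist.
    destruct (Nat.le_gt_cases n1 n2).
    - rewrite <- Hf2. eapply Rle_lt_trans. apply Hf. apply HM; lia.
    - rewrite Rabs_minus_sym. rewrite <- Hf2. eapply Rle_lt_trans. apply Hf. apply HM; lia. }
  destruct (Rcomplete.R_complete _ (Hcc fst Cmod_fst (fun z1 z2 => eq_refl))) as [a Ha].
  destruct (Rcomplete.R_complete _ (Hcc snd Cmod_snd (fun z1 z2 => eq_refl))) as [b Hb].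
  assert (Hwc : forall m, Cmod (Cminus (w m) (a, b)) <= h * eps * gf h n pk m).
  { intro m. destruct (Rle_or_lt (Cmod (Cminus (w m) (a, b))) (h * eps * gf h n pk m)) as [H|H]; auto. exfalso.
    set (dd := (Cmod (Cminus (w m) (a, b)) - h * eps * gf h n pk m) / 2).
    assert (Hdd : dd > 0) by (unfold dd; lra).
    destruct (Ha dd Hdd) as [N1 HN1]. destruct (Hb dd Hdd) as [N2 HN2].
    set (N := (m + N1 + N2)%nat).
    specialize (HN1 N ltac:(unfold N; lia)). specialize (HN2 N ltac:(unfold N; lia)). unfold Rdist in HN1, HN2.
    assert (Hm := Hcd m (N - m)%nat). replace (m + (N - m))%nat with N in Hm by (unfold N; lia).
    assert (0 <= gf h n pk N) by (apply g_nonneg; auto).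
    assert (Cmod (Cminus (w N) (a, b)) < 2 * dd).
    { eapply Rle_lt_trans. apply Cmod_le_sum. change (Rabs (fst (w N) - a) + Rabs (snd (w N) - b) < 2 * dd). lra. }
    assert (Cmod (Cminus (w m) (a, b)) <= Cmod (Cminus (w m) (w N)) + Cmod (Cminus (w N) (a, b))).
    { replace (Cminus (w m) (a, b)) with (Cplus (Cminus (w m) (w N)) (Cminus (w N) (a, b))) by ring. apply Cmod_triangle. }
    assert (0 <= h * eps * gf h n pk N) by (apply Rmult_le_pos; nra).
    unfold dd in *. lra. }
  exists (a, b). intro m.
  assert (H1 := ef_nz h n pk p m Hn HE0 Hp).
  replace (Cminus (phi m) (Cmult (a, b) (ef h p m))) with (Cmult (Cminus (w m) (a, b)) (ef h p m)) by (unfold w; field; auto).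
  rewrite Cmod_mult, (Cmod_ef h n pk p m) by auto.
  assert (HP := P_pos h n pk m Hn HE0).
  eapply Rle_trans. apply Rmult_le_compat_r. lra. apply Hwc.
  unfold Bf, gf. rewrite Rabs_left by lra. right. field. lra. Qed.

Lemma bernoulli x q : 0 <= x -> 1 + INR q * x <= (1 + x) ^ q.
Proof. intros Hx. induction q. simpl. lra. rewrite S_INR. simpl.
  assert (0 <= INR q) by apply pos_INR. assert (0 <= INR q * x * x) by (apply Rmult_le_pos; nra). nra. Qed.

Lemma P_pow h n pk q : (0 < n)%nat -> 0 < E_const h n pk -> Pf h n pk (q * n) = E_const h n pk ^ q.
Proof. intros. induction q. reflexivity. replace (S q * n)%nat with (q * n + n)%nat by lia.
  rewrite P_per by auto. rewrite IHq. simpl. ring. Qed.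

Lemma stab h n pk p : 0 < h -> (0 < n)%nat -> 0 < E_const h n pk -> E_const h n pk <> 1 ->
  (forall m, p m = pk (m mod n)) -> ulam_constant h p (K0_const h n pk).
Proof. intros Hh Hn HE H1 Hp. split. apply K0_pos; auto.
  intros eps Heps phi Hphi.
  destruct (Rlt_or_le (E_const h n pk) 1) as [Hl|Hg].
  - exists (fun m => Cmult (phi O) (ef h p m)). split. apply ef_sol; auto.
    intro m. eapply Rle_trans. apply (case_lt1 h n pk p phi eps); auto.
    assert (H := K0_bound h n pk m Hh Hn HE H1). nra.
  - destruct (case_gt1 h n pk p phi eps) as [c Hc]; auto. lra.
    exists (fun m => Cmult c (ef h p m)). split. apply ef_sol; auto.
    intro m. eapply Rle_trans. apply Hc.
    assert (H := K0_bound h n pk m Hh Hn HE H1). nra. Qed.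

Lemma minim h n pk p : 0 < h -> (0 < n)%nat -> 1 < E_const h n pk ->
  (forall m, p m = pk (m mod n)) ->
  forall K, 0 < K -> K < K0_const h n pk -> ~ ulam_constant h p K.
Proof. intros Hh Hn HE Hp K HK HKK [_ HU].
  assert (HE0 : 0 < E_const h n pk) by lra. assert (H1 : E_const h n pk <> 1) by lra.
  set (phi := fun m => Cmult (RtoC (- (h * gf h n pk m))) (ef h p m)).
  assert (Hr : forall m, Cmod (Cminus (delta_h h phi m) (Cmult (p m) (phi m))) <= 1).
  { intro m. replace (Cminus (delta_h h phi m) (Cmult (p m) (phi m))) with
      (Cmult (ef h p (S m)) (RtoC (gf h n pk m - gf h n pk (S m)))).
    2:{ unfold delta_h, phi. simpl. rewrite !RtoC_opp, !RtoC_mult, !RtoC_minus. field. apply hC; auto. }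
    rewrite Cmod_mult, Cmod_R, (Cmod_ef h n pk p) by auto. rewrite (g_step h n pk m) by auto.
    replace (gf h n pk (S m) + / Pf h n pk (S m) - gf h n pk (S m)) with (/ Pf h n pk (S m)) by ring.
    assert (0 < Pf h n pk (S m)) by (apply P_pos; auto).
    rewrite Rabs_right. right. field. lra. left. apply Rinv_0_lt_compat; auto. }
  destruct (HU 1 ltac:(lra) phi Hr) as [x [Hx Hb]].
  assert (Hphib : forall m, Cmod (phi m) = h * Bf h n pk m).
  { intro m. unfold phi. rewrite Cmod_mult, Cmod_R, (Cmod_ef h n pk p) by auto.
    assert (0 <= gf h n pk m) by (apply g_nonneg; auto).
    rewrite Rabs_left1 by nra. unfold Bf, gf. rewrite Rabs_left by lra. field. lra. }
  assert (Hx0 : x O = RtoC 0).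
  { destruct (Req_dec (Cmod (x O)) 0) as [Z|NZ]. apply Cmod_eq_0; auto. exfalso.
    assert (Hc : 0 < Cmod (x O)) by (pose proof (Cmod_ge_0 (x O)); lra).
    assert (Hall : forall m, Cmod (x O) * Pf h n pk m <= K + K0_const h n pk).
    { intro m. rewrite <- (Cmod_ef h n pk p m) by auto. rewrite <- Cmod_mult. rewrite <- (sol_form h p x Hh Hx m).
      replace (x m) with (Cplus (phi m) (Copp (Cminus (phi m) (x m)))) by ring.
      eapply Rle_trans. apply Cmod_triangle. rewrite Cmod_opp, Hphib.
      assert (H := K0_bound h n pk m Hh Hn HE0 H1). specialize (Hb m). lra. }
    assert (HK0 := K0_pos h n pk Hh Hn HE0 H1).
    set (M := K + K0_const h n pk + 1).
    destruct (archimed_cor1 (Cmod (x O) * (E_const h n pk - 1) / M)) as [N [HN HN0]].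
    { apply Rdiv_lt_0_compat. nra. unfold M; lra. }
    specialize (Hall (N * n)%nat). rewrite P_pow in Hall by auto.
    assert (HB := bernoulli (E_const h n pk - 1) N ltac:(lra)). replace (1 + (E_const h n pk - 1)) with (E_const h n pk) in HB by ring.
    assert (HI : 0 < INR N) by (apply lt_0_INR; lia).
    assert (M < INR N * (Cmod (x O) * (E_const h n pk - 1))).
    { apply (Rmult_lt_compat_l (INR N * M)) in HN. 2:{ apply Rmult_lt_0_compat; auto. unfold M; lra. }
      replace (INR N * M * / INR N) with M in HN by (field; lra).
      replace (INR N * M * (Cmod (x O) * (E_const h n pk - 1) / M)) with (INR N * (Cmod (x O) * (E_const h n pk - 1))) in HN by (field; unfold M; lra). auto. }
    unfold M in *. nra. }
  destruct (maxR_att (S_const h n pk) (n - 1)) as [k [Hk Hmax]].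
  specialize (Hb k). rewrite (sol_form h p x Hh Hx k), Hx0 in Hb.
  replace (Cminus (phi k) (Cmult (RtoC 0) (ef h p k))) with (phi k) in Hb by ring.
  rewrite Hphib in Hb. unfold Bf in Hb. replace (S_const h n pk k) with (S_const h n pk (k mod n)) in Hmax by (rewrite Nat.mod_small by lia; auto).
  rewrite S_eq in Hmax by auto.
  unfold K0_const in HKK. rewrite Hmax in HKK. lra. Qed.

Theorem theorem4p4 (h : R) (n : nat) (pk : nat -> C) (p : nat -> C) :
  0 < h ->
  (0 < n)%nat ->
  (forall i : nat, (i < n)%nat -> pk i <> RtoC (- / h)) ->
  (* p(t) = p_k when t/h = k (mod n) *)
  (forall m : nat, p m = pk (m mod n)) ->
  (* p has no period smaller than n *)
  (forall q : nat, (0 < q)%nat -> (q < n)%nat -> exists m : nat, p (m + q)%nat <> p m) ->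
  0 < E_const h n pk ->
  E_const h n pk <> 1 ->
  ulam_stable h p /\ ulam_constant h p (K0_const h n pk) /\
  (1 < E_const h n pk -> min_ulam_constant h p (K0_const h n pk)).
Proof.
  intros Hh Hn _ Hp _ HE H1.
  assert (Hs := stab h n pk p Hh Hn HE H1 Hp).
  split. exists (K0_const h n pk); auto. split; auto.
  intros Hg. split; auto. apply minim; auto.
Qed.
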